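(* Let $d\geq 2$ and let $\mathsf{M}_1,\mathsf{M}_2$ be two sharp $d$-outcome measurements on $\mathbb{C}^d$, i.e. $\mathsf{M}_1(x)=|\varphi_x\rangle\langle\varphi_x|$ and $\mathsf{M}_2(y)=|\psi_y\rangle\langle\psi_y|$ for orthonormal bases $\{\varphi_x\}_{x=1}^d$, $\{\psi_y\}_{y=1}^d$. Then $$\bar{P}_{\rm qrac}(\mathsf{M}_1,\mathsf{M}_2)=\frac{1}{2d^2}\sum_{x,y=1}^d \big\|\mathsf{M}_1(x)+\mathsf{M}_2(y)\big\| \geq \frac12\left(1+\frac1d\right),$$ with equality if and only if $\mathsf{M}_1$ and $\mathsf{M}_2$ are compatible (equivalently, there is a permutation $\sigma$ of $\{1,\dots,d\}$ with $\mathsf{M}_2(y)=\mathsf{M}_1(\sigma(y))$ for all $y$).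
   Context: $\|\cdot\|$ is the operator norm. Two POVMs $\mathsf{M}_1,\mathsf{M}_2$ are compatible if there is a POVM $\mathsf{G}$ on the product outcome set with $\sum_y\mathsf{G}(x,y)=\mathsf{M}_1(x)$ and $\sum_x\mathsf{G}(x,y)=\mathsf{M}_2(y)$. $\bar P_{\rm qrac}$ is the optimal (over encodings) average success probability in the $(2,d)$ quantum random access code, given by the displayed formula, and $\frac12(1+\frac1d)$ is the optimal classical $(2,d)$ random access code success probability. *)

(* Defs.v *)
From HB Require Import structures.
From mathcomp Require Import all_boot all_order all_algebra.
From mathcomp Require Import classical_sets reals.
From mathcomp Require Import complex.
Set Implicit Arguments. Unset Strict Implicit. Unset Printing Implicit Defensive.
Import Order.TTheory GRing.Theory Num.Theory.
Local Open Scope ring_scope.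
Local Open Scope complex_scope.
Local Open Scope sesquilinear_scope.

Section QRAC.
Variables (R : realType) (d : nat).
Local Notation C := R[i].

Definition vnorm (v : 'cV[C]_d) : R :=
  Num.sqrt (\sum_(i < d) (complex.Re (v i 0) ^+ 2 + complex.Im (v i 0) ^+ 2)).

Definition opnorm (A : 'M[C]_d) : R :=
  sup [set vnorm (A *m v) | v in [set v : 'cV[C]_d | vnorm v = 1]]%classic.

Definition psdmx (A : 'M[C]_d) : Prop :=
  forall v : 'cV[C]_d, 0 <= ((v ^t* *m A *m v) 0 0).

Definition orthonormal_basis (phi : 'I_d -> 'cV[C]_d) : Prop :=
  forall x y, (phi x) ^t* *m phi y = (x == y)%:R%:M.

Definition sharp_meas (phi : 'I_d -> 'cV[C]_d) (x : 'I_d) : 'M[C]_d :=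
  phi x *m (phi x) ^t*.

Definition compatible (M1 M2 : 'I_d -> 'M[C]_d) : Prop :=
  exists G : 'I_d -> 'I_d -> 'M[C]_d,
    (forall x y, psdmx (G x y)) /\
    \sum_(x < d) \sum_(y < d) G x y = 1%:M /\
    (forall x, \sum_(y < d) G x y = M1 x) /\
    (forall y, \sum_(x < d) G x y = M2 y).

Definition Pqrac (M1 M2 : 'I_d -> 'M[C]_d) : R :=
  (2 * d ^ 2)%:R^-1 * \sum_(x < d) \sum_(y < d) opnorm (M1 x + M2 y).

End QRAC.

(* Main.v *)
Require Import Defs.
From HB Require Import structures.
From mathcomp Require Import all_boot all_order all_algebra all_fingroup.
From mathcomp Require Import classical_sets reals complex.
From mathcomp Require Import ring lra.
Set Implicit Arguments. Unset Strict Implicit. Unset Printing Implicit Defensive.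
Import Order.TTheory GRing.Theory Num.Theory.
Local Open Scope ring_scope.
Local Open Scope complex_scope.

Section Cx.
Variable R : realType.
Local Notation C := R[i].
Implicit Types x y z : C.
Local Notation Re := complex.Re.
Local Notation Im := complex.Im.
Local Notation cj := (@Num.conj C).

Lemma ReD x y : Re (x + y) = Re x + Re y. Proof. by case: x; case: y. Qed.
Lemma ImD x y : Im (x + y) = Im x + Im y. Proof. by case: x; case: y. Qed.
Lemma ReN x : Re (- x) = - Re x. Proof. by case: x. Qed.
Lemma ImN x : Im (- x) = - Im x. Proof. by case: x. Qed.
Lemma ReM x y : Re (x * y) = Re x * Re y - Im x * Im y. Proof. by case: x; case: y. Qed.
Lemma ImM x y : Im (x * y) = Re x * Im y + Im x * Re y.
Proof. by case: x => a b; case: y => c e /=; ring. Qed.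
Lemma Recj x : Re (cj x) = Re x. Proof. by case: x. Qed.
Lemma Imcj x : Im (cj x) = - Im x. Proof. by case: x. Qed.
Lemma ReC (k : R) : Re k%:C = k. Proof. by []. Qed.
Lemma ImC (k : R) : Im k%:C = 0. Proof. by []. Qed.
Lemma Re0 : Re (0:C) = 0. Proof. by []. Qed.
Lemma Im0 : Im (0:C) = 0. Proof. by []. Qed.
Lemma Re1 : Re (1:C) = 1. Proof. by []. Qed.
Lemma Im1 : Im (1:C) = 0. Proof. by []. Qed.
Lemma Rei : Re ('i%C : C) = (0 : R). Proof. by []. Qed.
Lemma Imi : Im ('i%C : C) = 1. Proof. by []. Qed.
Lemma Cext x y : Re x = Re y -> Im x = Im y -> x = y.
Proof. by case: x; case: y => /= ? ? ? ? -> ->. Qed.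
Lemma cjC (k : R) : cj k%:C = k%:C.
Proof. by apply: Cext; rewrite ?Recj ?Imcj /= ?oppr0. Qed.

Definition nC x : R := Re x ^+ 2 + Im x ^+ 2.
Lemma nC_ge0 x : 0 <= nC x. Proof. by rewrite /nC addr_ge0 // sqr_ge0. Qed.
Lemma cjM x : cj x * x = (nC x)%:C.
Proof. apply: Cext; rewrite ?ReM ?ImM ?Recj ?Imcj /nC /=; ring. Qed.
Lemma nC_eq0 x : nC x = 0 -> x = 0.
Proof. rewrite /nC => h; apply: Cext => /=; nra. Qed.
Lemma nCM x y : nC (x * y) = nC x * nC y.
Proof. rewrite /nC ReM ImM; ring. Qed.
Lemma nCcj x : nC (cj x) = nC x.
Proof. rewrite /nC Recj Imcj; ring. Qed.
Lemma le0C x : (0 <= x) = (Im x == 0) && (0 <= Re x).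
Proof. by case: x => a b; rewrite lecE /= eq_sym. Qed.
End Cx.

Local Open Scope sesquilinear_scope.
Section Vec.
Variables (R : realType) (d : nat).
Local Notation C := R[i].
Local Notation Re := complex.Re.
Local Notation Im := complex.Im.
Local Notation cj := (@Num.conj C).
Local Notation vec := 'cV[C]_d.
Implicit Types u v w f g : vec.

Definition dot u v : C := \sum_i cj (u i 0) * v i 0.
Definition form (M : 'M[C]_d) u w : C := \sum_i \sum_j cj (u i 0) * M i j * w j 0.

Lemma dotE u v : (u ^t* *m v) 0 0 = dot u v.
Proof. by rewrite !mxE; apply: eq_bigr => i _; rewrite !mxE. Qed.

Lemma formE M u w : (u ^t* *m M *m w) 0 0 = form M u w.
Proof.
rewrite mxE /form exchange_big; apply: eq_bigr => j _.
rewrite mxE mulr_suml; apply: eq_bigr => i _; rewrite !mxE.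
by [].
Qed.

Lemma dotDr u v w : dot u (v + w) = dot u v + dot u w.
Proof. by rewrite /dot -big_split; apply: eq_bigr => i _; rewrite mxE mulrDr. Qed.
Lemma dotDl u v w : dot (u + v) w = dot u w + dot v w.
Proof. by rewrite /dot -big_split; apply: eq_bigr => i _; rewrite mxE rmorphD mulrDl. Qed.
Lemma dotZr u v k : dot u (k *: v) = k * dot u v.
Proof. by rewrite /dot mulr_sumr; apply: eq_bigr => i _; rewrite mxE mulrCA. Qed.
Lemma dotZl u v k : dot (k *: u) v = cj k * dot u v.
Proof. by rewrite /dot mulr_sumr; apply: eq_bigr => i _; rewrite mxE rmorphM mulrA. Qed.
Lemma dotNr u v : dot u (- v) = - dot u v.
Proof. by rewrite -scaleN1r dotZr mulN1r. Qed.
Lemma dotNl u v : dot (- u) v = - dot u v.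
Proof. by rewrite -scaleN1r dotZl rmorphN1 mulN1r. Qed.
Lemma dot_sumr u (F : 'I_d -> vec) : dot u (\sum_x F x) = \sum_x dot u (F x).
Proof.
rewrite /dot exchange_big; apply: eq_bigr => i _.
by rewrite summxE mulr_sumr.
Qed.
Lemma dot_suml v (F : 'I_d -> vec) : dot (\sum_x F x) v = \sum_x dot (F x) v.
Proof.
rewrite /dot exchange_big; apply: eq_bigr => i _.
by rewrite summxE rmorph_sum mulr_suml.
Qed.
Lemma dotC u v : cj (dot u v) = dot v u.
Proof.
rewrite /dot rmorph_sum; apply: eq_bigr => i _.
by rewrite rmorphM /= conjCK mulrC.
Qed.
Lemma dotvv v : dot v v = (\sum_i nC (v i 0))%:C.
Proof.
rewrite /dot rmorph_sum; apply: eq_bigr => i _; exact: cjM.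
Qed.
Lemma Re_dotvv_ge0 v : 0 <= Re (dot v v).
Proof. rewrite dotvv /=; apply: sumr_ge0 => i _; exact: nC_ge0. Qed.

Lemma vnormE v : vnorm v = Num.sqrt (Re (dot v v)).
Proof. by rewrite dotvv. Qed.

Lemma meas_mul f v : (f *m f ^t*) *m v = dot f v *: f.
Proof.
by rewrite -mulmxA [f^t* *m v]mx11_scalar mul_mx_scalar dotE.
Qed.

Lemma form_meas f u w : form (f *m f ^t*) u w = dot u f * dot f w.
Proof.
rewrite -formE -mulmxA meas_mul -scalemxAr mxE dotE mulrC.
by [].
Qed.

Lemma formDr M u v w : form M u (v + w) = form M u v + form M u w.
Proof.
rewrite /form -big_split; apply: eq_bigr => i _.
rewrite -big_split; apply: eq_bigr => j _; rewrite mxE mulrDr //.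
Qed.
Lemma formDl M u v w : form M (u + v) w = form M u w + form M v w.
Proof.
rewrite /form -big_split; apply: eq_bigr => i _.
rewrite -big_split; apply: eq_bigr => j _; rewrite mxE rmorphD !mulrDl //.
Qed.
Lemma formZr M u v k : form M u (k *: v) = k * form M u v.
Proof.
rewrite /form mulr_sumr; apply: eq_bigr => i _.
rewrite mulr_sumr; apply: eq_bigr => j _; rewrite mxE; ring.
Qed.
Lemma formZl M u v k : form M (k *: u) v = cj k * form M u v.
Proof.
rewrite /form mulr_sumr; apply: eq_bigr => i _.
rewrite mulr_sumr; apply: eq_bigr => j _; rewrite mxE rmorphM; ring.
Qed.
Lemma form_sumr M u (F : 'I_d -> vec) : form M u (\sum_x F x) = \sum_x form M u (F x).
Proof.
rewrite /form [RHS]exchange_big; apply: eq_bigr => i _.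
rewrite [RHS]exchange_big; apply: eq_bigr => j _.
by rewrite summxE mulr_sumr.
Qed.
Lemma form_suml M v (F : 'I_d -> vec) : form M (\sum_x F x) v = \sum_x form M (F x) v.
Proof.
rewrite /form [RHS]exchange_big; apply: eq_bigr => i _.
rewrite [RHS]exchange_big; apply: eq_bigr => j _.
by rewrite summxE rmorph_sum !mulr_suml.
Qed.
Lemma form_sumM (F : 'I_d -> 'M[C]_d) u v : form (\sum_x F x) u v = \sum_x form (F x) u v.
Proof.
rewrite /form [RHS]exchange_big; apply: eq_bigr => i _.
rewrite [RHS]exchange_big; apply: eq_bigr => j _.
by rewrite summxE mulr_sumr mulr_suml.
Qed.

Lemma sqrt_eq1 (x : R) : Num.sqrt x = 1 -> x = 1.
Proof.
have [x0|x0] := leP 0 x.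
  by move=> h; rewrite -(sqr_sqrtr x0) h expr1n.
by rewrite ltr0_sqrtr // => /eqP; rewrite eq_sym oner_eq0.
Qed.

Lemma vnorm1 v : vnorm v = 1 -> Re (dot v v) = 1.
Proof. by rewrite vnormE => /sqrt_eq1. Qed.

Ltac reim := rewrite ?(ReD, ImD, ReM, ImM, Recj, Imcj, ReN, ImN, ReC, ImC, Rei, Imi).

Lemma core (al be c V : C) : Re V = 1 ->
  let a := Num.sqrt (nC c) in
  let S := al * cj al + be * cj be in
  0 <= Re (cj (1+a)%:C * (1+a)%:C * V - cj (1+a)%:C * S - (1+a)%:C * cj S
     + (cj al * al + cj al * be * c + cj be * al * cj c + cj be * be)) ->
  Re (cj al * al + cj al * be * c + cj be * al * cj c + cj be * be) <= (1 + a) ^+ 2.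
Proof.
move=> V1 a S.
have a0 : 0 <= a by exact: sqrtr_ge0.
have ha := sqr_sqrtr (nC_ge0 c).
have p0 : 0 <= Num.sqrt (nC al) by exact: sqrtr_ge0.
have q0 : 0 <= Num.sqrt (nC be) by exact: sqrtr_ge0.
have hp := sqr_sqrtr (nC_ge0 al).
have hq := sqr_sqrtr (nC_ge0 be).
rewrite -/a in ha.
move: (Num.sqrt (nC al)) (Num.sqrt (nC be)) p0 q0 hp hq => p q p0 q0 hp hq.
rewrite /S; clear S.
move: a a0 ha => a a0 ha.
rewrite cjC.
case: al hp => a1 a2; case: be hq => b1 b2; case: c ha => c1 c2.
rewrite /nC /= => ha hq hp.
reim. rewrite /= V1.
set Z := a1 * b1 + a2 * b2; set Y := a1 * b2 - a2 * b1.
set X := Z * c1 - Y * c2.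
have id1 : X ^+ 2 + (Z * c2 + Y * c1) ^+ 2 = (Z ^+ 2 + Y ^+ 2) * (c1 ^+ 2 + c2 ^+ 2).
  rewrite /X; ring.
have id2 : Z ^+ 2 + Y ^+ 2 = (a1 ^+ 2 + a2 ^+ 2) * (b1 ^+ 2 + b2 ^+ 2).
  rewrite /Z /Y; ring.
have hX : X ^+ 2 <= (p * a * q) ^+ 2.
  have : 0 <= (Z * c2 + Y * c1) ^+ 2 by exact: sqr_ge0.
  have e : (p * a * q) ^+ 2 = (Z ^+ 2 + Y ^+ 2) * (c1 ^+ 2 + c2 ^+ 2).
    by rewrite !exprMn hp hq ha id2; ring.
  rewrite e -id1; lra.
have hX2 : X <= p * a * q.
  have h0 : 0 <= p * a * q by rewrite !mulr_ge0.
  nra.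
have eN : a1 * a1 - - a2 * a2 + ((a1 * b1 - - a2 * b2) * c1 - (a1 * b2 + - a2 * b1) * c2) +
   ((b1 * a1 - - b2 * a2) * c1 - (b1 * a2 + - b2 * a1) * - c2) + (b1 * b1 - - b2 * b2)
   = p ^+ 2 + q ^+ 2 + 2 * X.
  rewrite hp hq /X /Z /Y; ring.
have eS : a1 * a1 - a2 * - a2 + (b1 * b1 - b2 * - b2) = p ^+ 2 + q ^+ 2.
  rewrite hp hq; ring.
rewrite eN eS.
have hpq : 2 * p * q <= p ^+ 2 + q ^+ 2.
  have : 0 <= (p - q) ^+ 2 by exact: sqr_ge0.
  lra.
have hN : p ^+ 2 + q ^+ 2 + 2 * X <= (1 + a) * (p ^+ 2 + q ^+ 2).
  nra.
move=> W.
have hs : p ^+ 2 + q ^+ 2 <= 1 + a.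
  nra.
nra.
Qed.

Lemma dot_comb k v u : dot (k *: v - u) (k *: v - u) =
  cj k * k * dot v v - cj k * dot v u - k * cj (dot v u) + dot u u.
Proof.
rewrite !(dotDl, dotDr, dotZl, dotZr, dotNl, dotNr) -(dotC v u); ring.
Qed.

Lemma opnorm_ub f g v : dot f f = 1 -> dot g g = 1 -> vnorm v = 1 ->
  vnorm ((f *m f^t* + g *m g^t*) *m v) <= 1 + Num.sqrt (nC (dot f g)).
Proof.
move=> ff gg v1; have vv := vnorm1 v1.
rewrite mulmxDl !meas_mul vnormE.
set al := dot f v; set be := dot g v; set c := dot f g.
set u := al *: f + be *: g.
have gf : dot g f = cj c by rewrite /c dotC.
have vf : dot v f = cj al by rewrite /al dotC.
have vg : dot v g = cj be by rewrite /be dotC.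
have E1 : dot u u = cj al * al + cj al * be * c + cj be * al * cj c + cj be * be.
  rewrite /u !(dotDl, dotDr, dotZl, dotZr) ff gg gf -/c; ring.
have E2 : dot v u = al * cj al + be * cj be.
  by rewrite /u !(dotDr, dotZr) vf vg.
set a := Num.sqrt (nC c).
set w := (1 + a)%:C *: v - u.
have E3 : dot w w = cj (1+a)%:C * (1+a)%:C * dot v v - cj (1+a)%:C * dot v u
    - (1+a)%:C * cj (dot v u) + dot u u.
  exact: dot_comb.
have W := Re_dotvv_ge0 w.
rewrite E3 E2 E1 in W.
have := core vv W.
rewrite E1 -/a => h.
have a0 : 0 <= 1 + a by rewrite addr_ge0 // sqrtr_ge0.
by rewrite -(ger0_norm a0) -sqrtr_sqr ler_wsqrtr.
Qed.

Lemma vnormZ (k : R) w : vnorm (k%:C *: w) = `|k| * vnorm w.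
Proof.
rewrite !vnormE dotZl dotZr cjC mulrA -rmorphM /=.
reim; rewrite mul0r subr0 sqrtrM; last by rewrite -expr2 sqr_ge0.
by rewrite -expr2 sqrtr_sqr.
Qed.

Lemma eig f g : dot f f = 1 -> dot g g = 1 ->
  exists w, 0 < Re (dot w w) /\
    (f *m f^t* + g *m g^t*) *m w = (1 + Num.sqrt (nC (dot f g)))%:C *: w.
Proof.
move=> ff gg.
set c := dot f g; set a := Num.sqrt (nC c).
have gf : dot g f = cj c by rewrite /c dotC.
have ha := sqr_sqrtr (nC_ge0 c); rewrite -/a in ha.
have [c0|c0] := eqVneq c 0.
  exists f; rewrite ff /= ltr01; split => //.
  rewrite mulmxDl !meas_mul ff gf c0 rmorph0 scale0r addr0 /a c0 /nC /=.
  by rewrite expr0n /= addr0 sqrtr0 addr0 scale1r.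
have a0 : 0 < a.
  rewrite /a sqrtr_gt0 lt_def nC_ge0 andbT; apply/eqP => /nC_eq0; exact/eqP.
exists (a%:C *: f + cj c *: g); split.
  rewrite !(dotDl, dotDr, dotZl, dotZr) ff gg gf -/c cjC conjCK.
  clear gf c0; move: ha a0; clearbody a c; case: c => c1 c2; rewrite /nC /= => ha a0.
  reim; rewrite /=. nra.
rewrite mulmxDl !meas_mul !(dotDr, dotZr) ff gg gf -/c.
rewrite !scalerDr !scalerA.
have n1 : cj c * c = (a * a)%:C by rewrite cjM -ha expr2.
congr (_ *: _ + _ *: _).
  by rewrite mulr1 n1 rmorphM /= rmorphD /= mulrDl mul1r.
by rewrite mulr1 rmorphD /= mulrDl mul1r addrC mulrC.
Qed.

Lemma sup_attained (S : set R) m : S m -> (forall y, S y -> y <= m) -> sup S = m.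
Proof.
move=> Sm ub; apply/eqP; rewrite eq_le; apply/andP; split.
  by apply: ge_sup; [exists m | move=> y; apply: ub].
by apply: sup_upper_bound => //; split; [exists m | exists m => y; apply: ub].
Qed.

Lemma opnorm_pair f g : dot f f = 1 -> dot g g = 1 ->
  opnorm (f *m f^t* + g *m g^t*) = 1 + Num.sqrt (nC (dot f g)).
Proof.
move=> ff gg; rewrite /opnorm.
have [w [w0 Aw]] := eig ff gg.
set a := Num.sqrt (nC (dot f g)) in Aw *.
have a0 : 0 <= 1 + a by rewrite addr_ge0 // sqrtr_ge0.
set k := (Num.sqrt (Re (dot w w)))^-1.
have s0 : 0 < Num.sqrt (Re (dot w w)) by rewrite sqrtr_gt0.
have k0 : 0 < k by rewrite invr_gt0.
apply: sup_attained.
  exists (k%:C *: w).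
    rewrite /= vnormZ vnormE gtr0_norm // /k mulVf //; exact: lt0r_neq0.
  rewrite -scalemxAr Aw scalerA mulrC -scalerA vnormZ vnormZ vnormE.
  by rewrite (gtr0_norm k0) /k mulVf ?lt0r_neq0 // mulr1 ger0_norm.
by move=> y [v /= v1 <-]; apply: opnorm_ub.
Qed.

Lemma onb_dot (phi : 'I_d -> vec) : orthonormal_basis phi -> forall x y, dot (phi x) (phi y) = (x == y)%:R.
Proof.
move=> h x y; have := congr1 (fun M : 'M[C]_1 => M 0 0) (h x y).
by rewrite /= dotE mxE eqxx mulr1n.
Qed.

Lemma onb_complete (phi : 'I_d -> vec) : orthonormal_basis phi -> \sum_x sharp_meas phi x = 1%:M.
Proof.
move=> h.
pose U : 'M[C]_d := \matrix_(i, j) phi j i 0.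
have UU : U ^t* *m U = 1%:M.
  apply/matrixP => x y; rewrite !mxE -(onb_dot h) /dot.
  by apply: eq_bigr => i _; rewrite !mxE.
have UU' := mulmx1C UU.
rewrite -UU'; apply/matrixP => i j.
rewrite summxE !mxE; apply: eq_bigr => x _.
by rewrite !mxE big_ord1 !mxE.
Qed.

Lemma onb_expand (phi : 'I_d -> vec) : orthonormal_basis phi -> forall v, v = \sum_x dot (phi x) v *: phi x.
Proof.
move=> h v; rewrite -{1}[v]mul1mx -(onb_complete h) mulmx_suml.
by apply: eq_bigr => x _; rewrite /sharp_meas meas_mul.
Qed.

Lemma parseval (phi : 'I_d -> vec) : orthonormal_basis phi -> forall v,
  dot v v = (\sum_x nC (dot (phi x) v))%:C.
Proof.
move=> h v.
have -> : dot v v = dot v (\sum_x dot (phi x) v *: phi x) by rewrite -onb_expand.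
rewrite dot_sumr rmorph_sum; apply: eq_bigr => x _.
by rewrite dotZr -(dotC (phi x) v) mulrC cjM.
Qed.

Lemma sharp_scale k f : (k *: f) *m (k *: f)^t* = (k * cj k) *: (f *m f^t*).
Proof.
apply/matrixP => i j; rewrite !mxE !big_ord1 !mxE rmorphM /=; ring.
Qed.

Lemma lin_ge0 (X Y : R) : (forall t : R, 0 <= t * X + Y) -> X = 0.
Proof.
move=> h; apply/eqP; apply/negPn/negP => X0.
have := h (- (Y + 1) / X).
rewrite mulrAC -mulrA mulfV // mulr1; lra.
Qed.

Lemma psd_form M : psdmx M -> forall v, 0 <= form M v v.
Proof. by move=> h v; rewrite -formE. Qed.

Lemma psd_ker M u : psdmx M -> form M u u = 0 ->
  forall w, form M u w = 0 /\ form M w u = 0.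
Proof.
move=> /psd_form h uu w.
have key : forall w', forall t : R, 0 <= t%:C * form M u w' + t%:C * form M w' u + form M w' w'.
  move=> w' t; have := h (t%:C *: u + w').
  rewrite !(formDl, formDr, formZl, formZr) uu cjC; congr (_ <= _); ring.
have H1 := key w; have H2 := key ('i%C *: w).
rewrite !(formZl, formZr) in H2.
have i1 : Num.conj ('i%C : C) = - 'i%C by apply: Cext; rewrite ?Recj ?Imcj ?ReN ?ImN /= ?oppr0.
rewrite i1 in H2.
have Rj : Re ('i%C : C) = 0 by [].
have Ij : Im ('i%C : C) = 1 by [].
move: ('i%C : C) Rj Ij H2 => j Rj Ij H2.
move: (form M u w) (form M w u) (form M w w) H1 H2 => p q r H1 H2.
have R1 : forall t : R, 0 <= t * (Re p + Re q) + Re r.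
  move=> t; have := H1 t; rewrite le0C => /andP [_]; reim; rewrite /=; lra.
have I1 : forall t : R, t * (Im p + Im q) + Im r = 0.
  move=> t; have := H1 t; rewrite le0C => /andP [/eqP + _]; reim; rewrite /=.
  move=> e; rewrite -e; ring.
have R2 : forall t : R, 0 <= t * (- Im p + Im q) + Re r.
  move=> t; have := H2 t; rewrite le0C => /andP [_]; reim; rewrite Rj Ij; lra.
have I2 : forall t : R, t * (Re p - Re q) + Im r = 0.
  move=> t; have := H2 t; rewrite le0C => /andP [/eqP + _]; reim; rewrite Rj Ij.
  move=> e; rewrite -e; ring.
have I0 := I1 0; rewrite mul0r add0r in I0.
have e1 : Re p + Re q = 0 by apply: (lin_ge0 R1).
have e2 : - Im p + Im q = 0 by apply: (lin_ge0 R2).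
have e3 : Im p + Im q = 0 by have := I1 1; rewrite I0 mul1r addr0.
have e4 : Re p - Re q = 0 by have := I2 1; rewrite I0 mul1r addr0.
split; apply: Cext => /=; lra.
Qed.
End Vec.

Lemma sqrt_ge_self (R : realType) (x : R) : 0 <= x -> x <= 1 -> x <= Num.sqrt x.
Proof.
move=> x0 x1; have r0 : 0 <= Num.sqrt x := sqrtr_ge0 x.
have e := sqr_sqrtr x0.
move: (Num.sqrt x) r0 e => r r0 e; rewrite -e in x1 *; nra.
Qed.

Lemma sqrt_eq_self (R : realType) (x : R) : 0 <= x -> Num.sqrt x = x -> x = 0 \/ x = 1.
Proof.
move=> x0 h; have e := sqr_sqrtr x0; rewrite h in e.
have : x * (x - 1) = 0 by rewrite mulrBr mulr1 -expr2 e subrr.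
by move/eqP; rewrite mulf_eq0 subr_eq0 => /orP [/eqP|/eqP]; [left|right].
Qed.

Section Main.
Variables (R : realType) (d : nat) (phi psi : 'I_d -> 'cV[R[i]]_d).
Hypotheses (hphi : orthonormal_basis phi) (hpsi : orthonormal_basis psi).
Local Notation C := R[i].
Local Notation cj := (@Num.conj C).

Definition cc x y := dot (phi x) (psi y).
Definition nn x y := nC (cc x y).

Lemma phi1 x : dot (phi x) (phi x) = 1. Proof. by rewrite (onb_dot hphi) eqxx. Qed.
Lemma psi1 y : dot (psi y) (psi y) = 1. Proof. by rewrite (onb_dot hpsi) eqxx. Qed.

Lemma colsum y : \sum_x nn x y = 1.
Proof.
have := parseval hphi (psi y); rewrite psi1 => /(congr1 (@complex.Re R)) /= <-.
by [].
Qed.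

Lemma nn_ge0 x y : 0 <= nn x y. Proof. exact: nC_ge0. Qed.

Lemma nn_le1 x y : nn x y <= 1.
Proof.
rewrite -(colsum y) (bigD1 x) //= lerDl; apply: sumr_ge0 => i _; exact: nn_ge0.
Qed.

Lemma sum_nn : \sum_x \sum_y nn x y = d%:R.
Proof.
rewrite exchange_big /=; under eq_bigr do rewrite colsum.
by rewrite sumr_const card_ord.
Qed.

Definition SS := \sum_x \sum_y Num.sqrt (nn x y).

Lemma Pqrac_E : Pqrac (sharp_meas phi) (sharp_meas psi) =
  (2 * d ^ 2)%:R^-1 * (d%:R ^+ 2 + SS).
Proof.
rewrite /Pqrac; congr (_ * _).
have -> : \sum_x \sum_y opnorm (sharp_meas phi x + sharp_meas psi y) =
   \sum_x \sum_y (1 + Num.sqrt (nn x y)).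
  apply: eq_bigr => x _; apply: eq_bigr => y _.
  by rewrite /sharp_meas opnorm_pair ?phi1 ?psi1.
under eq_bigr do rewrite big_split /=.
rewrite big_split /=; congr (_ + _).
under eq_bigr do rewrite sumr_const card_ord.
by rewrite sumr_const card_ord expr2 mulr_natr.
Qed.

Lemma SS_ge : d%:R <= SS.
Proof.
rewrite -sum_nn; apply: ler_sum => x _; apply: ler_sum => y _.
apply: sqrt_ge_self; [exact: nn_ge0 | exact: nn_le1].
Qed.

Definition ZZ := forall x y, nn x y = 0 \/ nn x y = 1.

Lemma SS_ZZ : SS = d%:R -> ZZ.
Proof.
move=> e x y.
have h : \sum_x \sum_y (Num.sqrt (nn x y) - nn x y) = 0.
  under eq_bigr do rewrite sumrB.
  by rewrite sumrB -/SS e sum_nn subrr.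
have pos : forall x y, 0 <= Num.sqrt (nn x y) - nn x y.
  move=> x' y'; rewrite subr_ge0; apply: sqrt_ge_self; [exact: nn_ge0 | exact: nn_le1].
have hx : \sum_y (Num.sqrt (nn x y) - nn x y) = 0.
  have H0 : forall x', true -> 0 <= \sum_y (Num.sqrt (nn x' y) - nn x' y).
    by move=> x' _; apply: sumr_ge0 => y' _; exact: pos.
  exact: (psumr_eq0P H0 h).
have : Num.sqrt (nn x y) - nn x y = 0.
  have H0 : forall y', true -> 0 <= Num.sqrt (nn x y') - nn x y'.
    by move=> y' _; exact: pos.
  exact: (psumr_eq0P H0 hx).
move/eqP; rewrite subr_eq0 => /eqP; apply: sqrt_eq_self; exact: nn_ge0.
Qed.

Lemma ZZ_SS : ZZ -> SS = d%:R.
Proof.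
move=> z; rewrite -sum_nn; apply: eq_bigr => x _; apply: eq_bigr => y _.
by case: (z x y) => ->; rewrite ?sqrtr0 ?sqrtr1.
Qed.

Lemma ZZ_perm : ZZ -> exists sigma : {perm 'I_d},
  forall y, sharp_meas psi y = sharp_meas phi (sigma y).
Proof.
move=> z.
have ex : forall y, exists x, nn x y == 1.
  move=> y; case: (pickP (fun x => nn x y == 1)) => [x hx|no]; first by exists x.
  have := colsum y; rewrite big1 => [/eqP|x _]; first by rewrite eq_sym oner_eq0.
  by case: (z x y) => // e; have := no x; rewrite /= e eqxx.
pose s y := xchoose (ex y).
have s1 : forall y, nn (s y) y = 1 by move=> y; apply/eqP; exact: (xchooseP (ex y)).
have s0 : forall y x, x != s y -> cc x y = 0.
  move=> y x hx; apply: nC_eq0.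
  have := colsum y; rewrite (bigD1 (s y)) //= s1 -[X in _ = X](addr0 1) => /addrI h.
  exact: (psumr_eq0P (fun i _ => nn_ge0 i y) h).
have pe : forall y, psi y = cc (s y) y *: phi (s y).
  move=> y; rewrite {1}(onb_expand hphi (psi y)) (bigD1 (s y)) //= big1 ?addr0 //.
  by move=> x hx; rewrite -/(cc x y) s0 // scale0r.
have sinj : injective s.
  move=> y1 y2 e; apply/eqP/negPn/negP => ne.
  have := onb_dot hpsi y1 y2; rewrite (negbTE ne) pe [psi y2]pe e dotZl dotZr phi1 mulr1.
  move/(congr1 (@nC R)); rewrite nCM nCcj -/(nn (s y2) y1) -/(nn (s y2) y2) -{1}e !s1 mulr1.
  by move/eqP; rewrite /nC /= expr0n /= addr0 oner_eq0.
exists (perm sinj) => y; rewrite permE /sharp_meas pe sharp_scale.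
have : cc (s y) y * cj (cc (s y) y) = 1.
  by rewrite mulrC cjM -/(nn (s y) y) s1.
by move=> ->; rewrite scale1r.
Qed.

Lemma psd_meas (f : 'cV[C]_d) : psdmx (f *m f^t*).
Proof.
move=> v; rewrite formE form_meas -(dotC f v) cjM.
by rewrite ler0c nC_ge0.
Qed.

Lemma perm_compat (sigma : {perm 'I_d}) :
  (forall y, sharp_meas psi y = sharp_meas phi (sigma y)) ->
  compatible (sharp_meas phi) (sharp_meas psi).
Proof.
move=> hs.
exists (fun x y => if x == sigma y then sharp_meas phi x else 0).
have row : forall x, \sum_y (if x == sigma y then sharp_meas phi x else 0) = sharp_meas phi x.
  move=> x; rewrite (bigD1 (sigma^-1 x)%g) //= permKV eqxx big1 ?addr0 //.
  move=> y hy; case: eqP => // ex; move: hy; by rewrite ex permK eqxx.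
split; [|split; [|split]].
- move=> x y; case: eqP => _; first exact: psd_meas.
  by move=> v; rewrite mulmx0 mul0mx mxE.
- by under eq_bigr do rewrite row; rewrite (onb_complete hphi).
- exact: row.
- move=> y; rewrite (bigD1 (sigma y)) //= eqxx big1 ?addr0 ?hs //.
  by move=> x /negbTE ->.
Qed.

Lemma compat_ZZ : compatible (sharp_meas phi) (sharp_meas psi) -> ZZ.
Proof.
move=> [G [Gpsd [_ [Grow Gcol]]]] x y.
have Gf : forall x y v, 0 <= form (G x y) v v by move=> *; apply: psd_form.
have rowf : forall x v, \sum_y form (G x y) v v = form (sharp_meas phi x) v v.
  by move=> x' v; rewrite -form_sumM Grow.
have colf : forall y v, \sum_x form (G x y) v v = form (sharp_meas psi y) v v.
  by move=> y' v; rewrite -form_sumM Gcol.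
have ka : forall x' y' x'', x'' != x' -> form (G x' y') (phi x'') (phi x'') = 0.
  move=> x' y' x'' ne.
  have := rowf x' (phi x''); rewrite /sharp_meas form_meas (onb_dot hphi x' x'').
  rewrite eq_sym (negbTE ne) mulr0 => h.
  have H0 : forall y0, true -> 0 <= form (G x' y0) (phi x'') (phi x'') by move=> *; exact: Gf.
  exact: (psumr_eq0P H0 h).
have kb : forall x' y' y'', y'' != y' -> form (G x' y') (psi y'') (psi y'') = 0.
  move=> x' y' y'' ne.
  have := colf y' (psi y''); rewrite /sharp_meas form_meas (onb_dot hpsi y' y'').
  rewrite eq_sym (negbTE ne) mulr0 => h.
  have H0 : forall x0, true -> 0 <= form (G x0 y') (psi y'') (psi y'') by move=> *; exact: Gf.
  exact: (psumr_eq0P H0 h).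
have gpsi : form (G x y) (psi y) (psi y) = (nn x y)%:C.
  have := rowf x (psi y); rewrite (bigD1 y) //= big1 ?addr0.
    by rewrite /sharp_meas form_meas -(dotC (phi x) (psi y)) cjM.
  by move=> y' ne; apply: kb; rewrite eq_sym.
have gphi : form (G x y) (phi x) (phi x) = (nn x y)%:C.
  have := colf y (phi x); rewrite (bigD1 x) //= big1 ?addr0.
    by rewrite /sharp_meas form_meas mulrC -(dotC (phi x) (psi y)) cjM.
  by move=> x' ne; apply: ka; rewrite eq_sym.
have e1 : form (G x y) (psi y) (psi y) = cc x y * form (G x y) (psi y) (phi x).
  rewrite {2}(onb_expand hphi (psi y)) form_sumr (bigD1 x) //= big1 ?addr0 ?formZr //.
  move=> x' ne; rewrite formZr.
  by rewrite (proj2 (psd_ker (Gpsd x y) (ka x y x' ne) (psi y))) mulr0.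
have e2 : form (G x y) (psi y) (phi x) = cj (cc x y) * form (G x y) (phi x) (phi x).
  rewrite {1}(onb_expand hphi (psi y)) form_suml (bigD1 x) //= big1 ?addr0 ?formZl //.
  move=> x' ne; rewrite formZl.
  by rewrite (proj1 (psd_ker (Gpsd x y) (ka x y x' ne) (phi x))) mulr0.
have : (nn x y)%:C = (nn x y)%:C * (nn x y)%:C.
  have h := gpsi; rewrite e1 e2 gphi mulrA [cc x y * _]mulrC cjM in h; by rewrite -{1}h.
rewrite -rmorphM => /complexI e.
have : nn x y * (nn x y - 1) = 0 by rewrite mulrBr mulr1 -e subrr.
by move/eqP; rewrite mulf_eq0 subr_eq0 => /orP [/eqP|/eqP]; [left|right].
Qed.
End Main.

Close Scope sesquilinear_scope.
Close Scope complex_scope.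
Unset Implicit Arguments.

Theorem proposition1 (R : realType) (d : nat) (hd : (2 <= d)%N)
    (phi psi : 'I_d -> 'cV[R[i]]_d)
    (hphi : orthonormal_basis phi) (hpsi : orthonormal_basis psi) :
  let M1 := sharp_meas phi in
  let M2 := sharp_meas psi in
  2^-1 * (1 + d%:R^-1) <= Pqrac M1 M2 /\
  (Pqrac M1 M2 = 2^-1 * (1 + d%:R^-1) <-> compatible M1 M2) /\
  (compatible M1 M2 <-> exists sigma : {perm 'I_d}, forall y, M2 y = M1 (sigma y)).
Proof.
move=> M1 M2.
have Pe := Pqrac_E hphi hpsi.
have d0 : (d%:R : R) != 0 by rewrite pnatr_eq0 -lt0n; apply: leq_trans hd.
have key : 2^-1 * (1 + d%:R^-1) = (2 * d ^ 2)%:R^-1 * (d%:R ^+ 2 + d%:R) :> R.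
  by rewrite natrM natrX; field.
have kpos : 0 < (2 * d ^ 2)%:R^-1 :> R.
  by rewrite invr_gt0 ltr0n muln_gt0 /= expn_gt0 (leq_trans _ hd).
split.
  rewrite /M1 /M2 Pe key; apply: ler_wpM2l; first exact: ltW.
  by rewrite lerD2l; exact: SS_ge.
split.
  split.
    rewrite /M1 /M2 Pe key => /(mulfI (lt0r_neq0 kpos)) /addrI h.
    have [s hs] := ZZ_perm hphi hpsi (SS_ZZ hphi hpsi h).
    exact: perm_compat hs.
  by move=> c; rewrite /M1 /M2 Pe key (ZZ_SS hphi hpsi (compat_ZZ hphi hpsi c)).
split.
  by move=> c; exact: ZZ_perm hphi hpsi (compat_ZZ hphi hpsi c).
by case=> s hs; exact: perm_compat hs.
Qed.
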